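(* Let $1\le k\le m<2n$. Under the shuffle representation, the image of $v[k,m]$ is $$v[k,m]=\alpha_k^m\cdot(x_mx_{m-1}\cdots x_{k+1}x_k),\qquad \alpha_k^m=\varepsilon_k^m(q-1)^{m-k}\prod_{k\le i<j\le m}p_{ij},$$ where $\varepsilon_k^m=1+q$ if $k\le n\le m$ and $m\ne\phi(k)$; $\varepsilon_k^m=1+q^{-1}$ if $m=\phi(k)\ne n$; and $\varepsilon_k^m=1$ otherwise.
   Context: Let $\mathbf{k}$ be a field, $G$ an abelian group, $n\ge 2$, $X=\{x_1,\dots,x_n\}$. Fix $g_i\in G$, characters $\chi^i:G\to\mathbf{k}^*$, $p_{ij}=\chi^i(g_j)$; for words $u,v$, $g_u,\chi^u$ are obtained by replacing $x_i$ by $g_i$, resp. $\chi^i$, and $p(u,v)=\chi^u(g_v)$ (bimultiplicative). $G\langle X\rangle$: skew group algebra, $x_ig=\chi^i(g)gx_i$; skew bracket $[u,v]=uv-p(u,v)vu$. Fix $q\in\mathbf{k}^*$, $q^3\ne1$, $q\ne-1$; assume $p_{ii}=q$ ($i<n$), $p_{nn}=q^2$, $p_{i,i-1}p_{i-1,i}=q^{-1}$ ($1<i<n$), $p_{n-1,n}p_{n,n-1}=q^{-2}$, $p_{ij}p_{ji}=1$ ($j>i+1$). $U_q^+(\mathfrak{sp}_{2n})$ is the quotient of $G\langle X\rangle$ by the ideal generated by $[x_i,[x_i,x_{i+1}]]$, $[[x_i,x_{i+1}],x_{i+1}]$ ($1\le i<n-1$), $[x_i,x_j]$ ($j>i+1$),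 $[[x_{n-1},x_n],x_n]$, $[x_{n-1},[x_{n-1},[x_{n-1},x_n]]]$. For $n<i<2n$, $x_i:=x_{2n-i}$ (and $p_{ij}$ for such indices means $\chi$ of the corresponding generators, e.g. $p_{ij}=p_{2n-i,j}$ if $i>n\ge j$); $\phi(i)=2n-i$. $v(k,m)=x_k\cdots x_m$; $v[k,k]=x_k$; for $k<m$: $v[k,m]=[[\dots[x_k,x_{k+1}],\dots],x_m]$ if $m<\phi(k)$; $v[k,m]=[x_k,[x_{k+1},[\dots,[x_{m-1},x_m]\dots]]]$ if $m>\phi(k)$; $v[k,m]=v[k,m-1]x_m-q^{-1}p(v(k,m-1),x_m)x_mv[k,m-1]$ if $m=\phi(k)$. Shuffle representation: let $\mathrm{Sh}$ be the vector space with basis the comonomials $(z_1\cdots z_r)$, $z_i\in X$, $r\ge0$, with the braided shuffle product $(a_1\cdots a_r)(b_1\cdots b_s)=\sum_w c_w\,(w)$, the sum over all shuffles $w$ of the two sequences, where $c_w=\prod p(b,a)^{-1}$ over all pairs of a letter $a$ of the first factor and a letter $b$ of the second factor such that $b$ precedes $a$ in $w$. The map $x_i\mapsto(x_i)$ extends to an algebra homomorphism from the subalgebra of $U_q^+(\mathfrak{sp}_{2n})$ generated by $x_1,\dots,x_n$ into $\mathrm{Sh}$; ''the image under the shuffle representation'' refers to this homomorphism. *)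

(* Defs.v *)
From HB Require Import structures.
From mathcomp Require Import all_boot all_order all_algebra.
Set Implicit Arguments. Unset Strict Implicit. Unset Printing Implicit Defensive.
Import Order.TTheory GRing.Theory Num.Theory.
Local Open Scope ring_scope.

(* Generators x_1..x_n are represented by their indices 1..n (nat).
   The bicharacter is given by the matrix p : nat -> nat -> K, p i j = p_ij
   (only the values for 1 <= i,j <= n matter).
   An element of the shuffle space Sh is represented as a finite formal
   linear combination: a list of pairs (coefficient, comonomial), a comonomial
   being a word (list of generator indices).  Two such lists denote the same
   element of Sh iff they have the same coefficient function [shcoef]. *)

Section Shuffle.
Variables (K : fieldType) (n : nat) (q : K) (p : nat -> nat -> K).

Definition shT := seq (K * seq nat).

Definition shcoef (x : shT) (w : seq nat) : K :=
  \sum_(t <- x | t.2 == w) t.1.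

Definition pw (u v : seq nat) : K := \prod_(a <- u) \prod_(b <- v) p a b.

(* braided shuffle product of two comonomials: the sum over all shuffles w
   with coefficient prod p(b,a)^-1 over pairs (a from first, b from second)
   with b preceding a in w *)
Fixpoint shw (u : seq nat) : seq nat -> shT :=
  match u with
  | [::] => fun v => [:: (1, v)]
  | a :: u' =>
    fix shw_a (v : seq nat) : shT :=
      match v with
      | [::] => [:: (1, a :: u')]
      | b :: v' =>
          [seq (t.1, a :: t.2) | t <- shw u' v] ++
          [seq ((\prod_(a' <- a :: u') (p b a')^-1) * t.1, b :: t.2)
             | t <- shw_a v']
      end
  end.

Definition shadd (x y : shT) : shT := x ++ y.
Definition shscale (c : K) (x : shT) : shT := [seq (c * t.1, t.2) | t <- x].
Definition shmul (x y : shT) : shT :=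
  flatten [seq [seq (t1.1 * t2.1 * t.1, t.2) | t <- shw t1.2 t2.2]
          | t1 <- x, t2 <- y].

(* skew bracket [x, y] = xy - c yx, where c = p(deg x, deg y) *)
Definition shbr (c : K) (x y : shT) : shT := shadd (shmul x y) (shscale (- c) (shmul y x)).

(* indices n < i < 2n denote x_{2n-i} *)
Definition idx (i : nat) : nat := if (i <= n)%N then i else (2 * n - i)%N.
Definition phi (i : nat) : nat := (2 * n - i)%N.

Definition letter (i : nat) : shT := [:: (1, [:: idx i])].

Definition vw (k m : nat) : seq nat := [seq idx i | i <- iota k (m.+1 - k)].

Fixpoint lnest (k d : nat) : shT :=
  match d with
  | 0 => letter k
  | d'.+1 => shbr (pw (vw k (k + d')) [:: idx (k + d)])
                  (lnest k d') (letter (k + d))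
  end.

Fixpoint rnest (d k : nat) : shT :=
  match d with
  | 0 => letter k
  | d'.+1 => shbr (pw [:: idx k] (vw k.+1 (k + d)))
                  (letter k) (rnest d' k.+1)
  end.

(* image of v[k,m] under the shuffle representation (k <= m) *)
Definition vkm (k m : nat) : shT :=
  if (m <= k)%N then letter k
  else if (m < phi k)%N then lnest k (m - k)
  else if (phi k < m)%N then rnest (m - k) k
  else let L := lnest k (m.-1 - k) in
       shadd (shmul L (letter m))
             (shscale (- (q^-1 * pw (vw k m.-1) [:: idx m])) (shmul (letter m) L)).

Definition eps (k m : nat) : K :=
  if [&& (k <= n)%N, (n <= m)%N & m != phi k] then 1 + q
  else if (m == phi k) && (m != n) then 1 + q^-1
  else 1.

Definition alpha (k m : nat) : K :=
  eps k m * (q - 1) ^+ (m - k) *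
  \prod_(k <= i < m.+1) \prod_(i.+1 <= j < m.+1) p (idx i) (idx j).

Definition revword (k m : nat) : seq nat := rev (vw k m).

End Shuffle.

(* Main.v *)
Require Import Defs.
From HB Require Import structures.
From mathcomp Require Import all_boot all_order all_algebra.
From mathcomp Require Import ring zify.
Set Implicit Arguments. Unset Strict Implicit. Unset Printing Implicit Defensive.
Import Order.TTheory GRing.Theory Num.Theory.
Local Open Scope ring_scope.

Section Gen.
Variables (K : fieldType) (p : nat -> nat -> K).

Definition ins (w : seq nat) (b : nat) (i : nat) := take i w ++ b :: drop i w.

Lemma shw_b_cons b a v : shw p [::b] (a::v) =
  (1, b::a::v) :: [seq ((\prod_(a' <- [:: b]) (p a a')^-1) * t.1, a :: t.2) | t <- shw p [::b] v].
Proof. by []. Qed.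

Lemma shwR (g : seq nat -> K) w b :
  \sum_(t <- shw p w [::b]) g t.2 * t.1 =
  \sum_(0 <= i < (size w).+1) g (ins w b i) * \prod_(l <- drop i w) (p b l)^-1.
Proof.
elim: w g => [|a u IH] g.
  by rewrite /= big_cons big_nil big_nat1 /ins /= big_nil !addr0.
rewrite /= big_cat big_map /= (IH (fun s => g (a :: s))) big_cons big_nil addr0.
rewrite big_nat_recl // /ins /= addrC mulr1; congr (_ + _).
Qed.

Lemma shwL (g : seq nat -> K) w b :
  \sum_(t <- shw p [::b] w) g t.2 * t.1 =
  \sum_(0 <= i < (size w).+1) g (ins w b i) * \prod_(l <- take i w) (p l b)^-1.
Proof.
elim: w g => [|a u IH] g.
  by rewrite /= big_cons big_nil big_nat1 /ins /= big_nil !addr0.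
rewrite shw_b_cons [X in X = _]big_cons big_map.
under eq_bigr do rewrite [_.1]/= [_.2]/= mulrCA.
rewrite -big_distrr (IH (fun s => g (a :: s))) [in RHS]big_nat_recl // /ins take0 drop0 big_nil mulr1.
congr (_ + _); rewrite big_distrr; apply: eq_bigr => i _.
by rewrite big_seq1 [take _.+1 _]/= [drop _.+1 _]/= big_cons mulrCA.
Qed.

Lemma shcoefE (x : shT K) (s : seq nat) : shcoef x s = \sum_(t <- x) (t.2 == s)%:R * t.1.
Proof.
rewrite /shcoef big_mkcond; apply: eq_bigr => t _.
by case: eqP => _; rewrite ?mul1r ?mul0r.
Qed.

Lemma shmulE (g : seq nat -> K) (x y : shT K) :
  \sum_(t <- shmul p x y) g t.2 * t.1 =
  \sum_(t1 <- x) \sum_(t2 <- y) t1.1 * t2.1 * \sum_(t <- shw p t1.2 t2.2) g t.2 * t.1.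
Proof.
rewrite /shmul big_flatten /= big_allpairs_dep /=.
apply: eq_bigr => t1 _; apply: eq_bigr => t2 _.
rewrite big_map big_distrr /=; apply: eq_bigr => t _.
by rewrite mulrCA.
Qed.

Lemma sum_shcoef (g : seq nat -> K) (x : shT K) (S : seq (seq nat)) : uniq S -> {subset map snd x <= S} ->
  \sum_(t <- x) g t.2 * t.1 = \sum_(s <- S) g s * shcoef x s.
Proof.
move=> uS; elim: x => [|t x IH] sub.
  by rewrite big_nil big1 // => s _; rewrite /shcoef big_nil mulr0.
have tS : t.2 \in S by apply: sub; rewrite inE eqxx.
rewrite big_cons IH; last by move=> z zx; apply: sub; rewrite inE zx orbT.
under [X in _ = X]eq_bigr do rewrite shcoefE big_cons -shcoefE mulrDr.
rewrite big_split /=; congr (_ + _).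
rewrite (bigD1_seq t.2) //= eqxx mul1r big1 ?addr0 // => s /negbTE.
by rewrite eq_sym => ->; rewrite mul0r mulr0.
Qed.

Lemma cong (g : seq nat -> K) (x y : shT K) : (forall s, shcoef x s = shcoef y s) ->
  \sum_(t <- x) g t.2 * t.1 = \sum_(t <- y) g t.2 * t.1.
Proof.
move=> e.
rewrite (@sum_shcoef g x (undup (map snd x ++ map snd y))) ?undup_uniq //; last first.
  by move=> z zx; rewrite mem_undup mem_cat zx.
rewrite (@sum_shcoef g y (undup (map snd x ++ map snd y))) ?undup_uniq //; last first.
  by move=> z zx; rewrite mem_undup mem_cat zx orbT.
by apply: eq_bigr => s _; rewrite e.
Qed.

Lemma shcoef_cat (x y : shT K) s : shcoef (x ++ y) s = shcoef x s + shcoef y s.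
Proof. by rewrite /shcoef big_cat. Qed.

Definition shequiv (x : shT K) (a : K) (w : seq nat) := forall s, shcoef x s = shcoef (shscale a [::(1,w)]) s.

Lemma shscaleE (c : K) (x : shT K) s : shcoef (shscale c x) s = c * shcoef x s.
Proof.
rewrite !shcoefE big_map big_distrr /=; apply: eq_bigr => t _.
by rewrite mulrCA.
Qed.

Lemma single_sum (g : seq nat -> K) (a : K) (w : seq nat) : \sum_(t <- shscale a [::(1,w)]) g t.2 * t.1 = a * g w.
Proof. by rewrite big_map big_seq1 /= mulr1 mulrC. Qed.

Lemma brL (x : shT K) (a : K) w b (c : K) s : shequiv x a w ->
  shcoef (shbr p c x [::(1,[::b])]) s = a * \sum_(0 <= i < (size w).+1)
    (ins w b i == s)%:R * (\prod_(l <- drop i w) (p b l)^-1 - c * \prod_(l <- take i w) (p l b)^-1).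
Proof.
move=> e.
rewrite /shbr /shadd shcoef_cat shscaleE !shcoefE !(shmulE (fun w0 => (w0 == s)%:R)).
under eq_bigr do rewrite big_seq1 mulr1 mulrC.
rewrite big_seq1 -[(1, [:: b]).1]/(1:K) -[(1,[::b]).2]/[::b].
under [X in _ + _ * X]eq_bigr do rewrite mul1r mulrC.
rewrite (@cong (fun w0 => \sum_(t <- shw p w0 [:: b]) (t.2 == s)%:R * t.1) x _ e).
rewrite (@cong (fun w0 => \sum_(t <- shw p [::b] w0) (t.2 == s)%:R * t.1) x _ e).
rewrite (single_sum (fun w0 => \sum_(t <- shw p w0 [:: b]) (t.2 == s)%:R * t.1)) (single_sum (fun w0 => \sum_(t <- shw p [::b] w0) (t.2 == s)%:R * t.1)) (shwR (fun w0 => (w0 == s)%:R)) (shwL (fun w0 => (w0 == s)%:R)).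
rewrite mulrCA -mulrDr; congr (_ * _).
rewrite big_distrr -big_split; apply: eq_bigr => i _.
by rewrite /= mulrBr mulrCA mulNr mulrN.
Qed.

Lemma brR (y : shT K) (a : K) w b (c : K) s : shequiv y a w ->
  shcoef (shbr p c [::(1,[::b])] y) s = a * \sum_(0 <= i < (size w).+1)
    (ins w b i == s)%:R * (\prod_(l <- take i w) (p l b)^-1 - c * \prod_(l <- drop i w) (p b l)^-1).
Proof.
move=> e.
rewrite /shbr /shadd shcoef_cat shscaleE !shcoefE !(shmulE (fun w0 => (w0 == s)%:R)).
rewrite big_seq1 -[(1, [:: b]).1]/(1:K) -[(1,[::b]).2]/[::b].
under eq_bigr do rewrite mul1r mulrC.
under [X in _ + _ * X]eq_bigr do rewrite big_seq1 mulr1 mulrC.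
rewrite (@cong (fun w0 => \sum_(t <- shw p [::b] w0) (t.2 == s)%:R * t.1) y _ e).
rewrite (@cong (fun w0 => \sum_(t <- shw p w0 [:: b]) (t.2 == s)%:R * t.1) y _ e).
rewrite (single_sum (fun w0 => \sum_(t <- shw p w0 [:: b]) (t.2 == s)%:R * t.1)) (single_sum (fun w0 => \sum_(t <- shw p [::b] w0) (t.2 == s)%:R * t.1)) (shwR (fun w0 => (w0 == s)%:R)) (shwL (fun w0 => (w0 == s)%:R)).
rewrite mulrCA -mulrDr; congr (_ * _).
rewrite big_distrr -big_split; apply: eq_bigr => i _.
by rewrite /= mulrBr mulrCA mulNr mulrN.
Qed.


Lemma sum_single (F : nat -> seq nat) (f : nat -> K) s N i0 :
  (i0 < N.+1)%N -> (forall i, (i < N.+1)%N -> i != i0 -> f i = 0) ->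
  \sum_(0 <= i < N.+1) (F i == s)%:R * f i = (F i0 == s)%:R * f i0.
Proof.
move=> hi0 hz.
rewrite (bigD1_seq i0) ?mem_iota ?iota_uniq //= big1_seq ?addr0 // => i /andP[ne].
by rewrite mem_iota add0n => /hz -> //; rewrite mulr0.
Qed.

Lemma sum_swap2 (G H : nat -> K) a b p0 : (a <= p0)%N -> (p0.+2 <= b)%N ->
  (forall i, (a <= i < b)%N -> i != p0 -> i != p0.+1 -> G i = H i) ->
  G p0 + G p0.+1 = H p0 + H p0.+1 ->
  \sum_(a <= i < b) G i = \sum_(a <= i < b) H i.
Proof.
move=> ha hb he hp.
have h1 : (a <= p0 <= b)%N by lia.
have h2 : (p0 <= p0.+2 <= b)%N by lia.
case/andP: h1 => h1a h1b; case/andP: h2 => h2a h2b.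
rewrite [LHS](big_cat_nat h1a h1b) [RHS](big_cat_nat h1a h1b).
rewrite [in LHS](big_cat_nat h2a h2b) [in RHS](big_cat_nat h2a h2b).
rewrite [in LHS]big_nat_recl // [in RHS]big_nat_recl // !big_nat1.
rewrite /= hp; congr (_ + (_ + _)).
- apply: eq_big_nat => i hi; apply: he; lia.
- apply: eq_big_nat => i hi; apply: he; lia.
Qed.

Lemma sum_pair (F : nat -> seq nat) (f : nat -> K) s N i0 p0 :
  (i0 < N.+1)%N -> (p0.+1 < N.+1)%N -> i0 != p0 -> i0 != p0.+1 ->
  F p0 = F p0.+1 -> f p0 + f p0.+1 = 0 ->
  (forall i, (i < N.+1)%N -> i != i0 -> i != p0 -> i != p0.+1 -> f i = 0) ->
  \sum_(0 <= i < N.+1) (F i == s)%:R * f i = (F i0 == s)%:R * f i0.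
Proof.
move=> hi0 hp0 n1 n2 eF ef hz.
rewrite (@sum_swap2 _ (fun i => (F i == s)%:R * (if i == i0 then f i0 else 0)) 0 N.+1 p0) //.
- rewrite (@sum_single F (fun i => if i == i0 then f i0 else 0) s N i0) ?eqxx //.
  by move=> i _ /negbTE ->.
- move=> i /andP[_ hi] h1 h2; case: (eqVneq i i0) => [->//|h3].
  by rewrite hz ?mulr0.
- rewrite [p0 == i0]eq_sym (negbTE n1) [p0.+1 == i0]eq_sym (negbTE n2) eF -mulrDr ef.
  by rewrite !mulr0 addr0.
Qed.

Lemma fL_eq w b i (c0 : K) :
  (forall l, l \in w -> p l b != 0) -> (forall l, l \in w -> p b l != 0) ->
  \prod_(l <- drop i w) (p b l)^-1 - c0 * (\prod_(l <- w) p l b) * \prod_(l <- take i w) (p l b)^-1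
  = \prod_(l <- drop i w) (p b l)^-1 * (1 - c0 * \prod_(l <- drop i w) (p l b * p b l)).
Proof.
move=> h1 h2.
rewrite -{2}(cat_take_drop i w) big_cat /= big_split /= !prodfV.
have X0 : \prod_(l <- take i w) p l b != 0.
  by rewrite prodf_seq_neq0; apply/allP => l /mem_take /h1.
have Z0 : \prod_(l <- drop i w) p b l != 0.
  by rewrite prodf_seq_neq0; apply/allP => l /mem_drop /h2.
by field; rewrite X0 Z0.
Qed.

Lemma fR_eq w a i (c0 : K) :
  (forall l, l \in w -> p l a != 0) -> (forall l, l \in w -> p a l != 0) ->
  \prod_(l <- take i w) (p l a)^-1 - c0 * (\prod_(l <- w) p a l) * \prod_(l <- drop i w) (p a l)^-1
  = \prod_(l <- take i w) (p l a)^-1 * (1 - c0 * \prod_(l <- take i w) (p l a * p a l)).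
Proof.
move=> h1 h2.
rewrite -{2}(cat_take_drop i w) big_cat /= big_split /= !prodfV.
have X0 : \prod_(l <- take i w) p l a != 0.
  by rewrite prodf_seq_neq0; apply/allP => l /mem_take /h1.
have Z0 : \prod_(l <- drop i w) p a l != 0.
  by rewrite prodf_seq_neq0; apply/allP => l /mem_drop /h2.
have Y0 : \prod_(l <- take i w) p a l != 0.
  by rewrite prodf_seq_neq0; apply/allP => l /mem_take /h2.
by field; rewrite X0 Z0.
Qed.


Lemma brL' (x : shT K) (a : K) w b (c0 : K) s : shequiv x a w ->
  (forall l, l \in w -> p l b != 0) -> (forall l, l \in w -> p b l != 0) ->
  shcoef (shbr p (c0 * \prod_(l <- w) p l b) x [::(1,[::b])]) s = a * \sum_(0 <= i < (size w).+1)
    (ins w b i == s)%:R * (\prod_(l <- drop i w) (p b l)^-1 * (1 - c0 * \prod_(l <- drop i w) (p l b * p b l))).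
Proof.
move=> e h1 h2; rewrite (brL _ _ _ e); congr (_ * _); apply: eq_bigr => i _.
by rewrite -fL_eq.
Qed.

Lemma brR' (y : shT K) (a : K) w b (c0 : K) s : shequiv y a w ->
  (forall l, l \in w -> p l b != 0) -> (forall l, l \in w -> p b l != 0) ->
  shcoef (shbr p (c0 * \prod_(l <- w) p b l) [::(1,[::b])] y) s = a * \sum_(0 <= i < (size w).+1)
    (ins w b i == s)%:R * (\prod_(l <- take i w) (p l b)^-1 * (1 - c0 * \prod_(l <- take i w) (p l b * p b l))).
Proof.
move=> e h1 h2; rewrite (brR _ _ _ e); congr (_ * _); apply: eq_bigr => i _.
by rewrite -fR_eq.
Qed.


Lemma ins_dup w b p0 : (p0 < size w)%N -> nth 0%N w p0 = b -> ins w b p0 = ins w b p0.+1.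
Proof.
move=> hp e; rewrite /ins (take_nth 0%N hp) (drop_nth 0%N hp) e.
by rewrite cat_rcons.
Qed.

Lemma pairL w b p0 (c0 : K) : (p0 < size w)%N -> nth 0%N w p0 = b -> p b b != 0 ->
  c0 * \prod_(l <- drop p0.+1 w) (p l b * p b l) = (p b b)^-1 ->
  \prod_(l <- drop p0 w) (p b l)^-1 * (1 - c0 * \prod_(l <- drop p0 w) (p l b * p b l)) +
  \prod_(l <- drop p0.+1 w) (p b l)^-1 * (1 - c0 * \prod_(l <- drop p0.+1 w) (p l b * p b l)) = 0.
Proof.
move=> hp e nz H; rewrite (drop_nth 0%N hp) e !big_cons mulrCA H.
by field.
Qed.

Lemma pairR w a p0 (c0 : K) : (p0 < size w)%N -> nth 0%N w p0 = a -> p a a != 0 ->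
  c0 * \prod_(l <- take p0 w) (p l a * p a l) = (p a a)^-1 ->
  \prod_(l <- take p0 w) (p l a)^-1 * (1 - c0 * \prod_(l <- take p0 w) (p l a * p a l)) +
  \prod_(l <- take p0.+1 w) (p l a)^-1 * (1 - c0 * \prod_(l <- take p0.+1 w) (p l a * p a l)) = 0.
Proof.
move=> hp e nz H; rewrite (take_nth 0%N hp) e -cats1 !big_cat !big_seq1 /= mulrA H.
by field.
Qed.

End Gen.

Section Spec.
Variables (K : fieldType) (n : nat) (q : K) (p : nat -> nat -> K).
Hypotheses (hn : (2 <= n)%N)
  (hq0 : q != 0)
  (hp0 : forall i j, (1 <= i <= n)%N -> (1 <= j <= n)%N -> p i j != 0)
  (hpii : forall i, (1 <= i < n)%N -> p i i = q)
  (hpnn : p n n = q ^+ 2)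
  (hpadj : forall i, (1 < i < n)%N -> p i i.-1 * p i.-1 i = q^-1)
  (hpn : p n.-1 n * p n n.-1 = q ^- 2)
  (hpfar : forall i j, (1 <= i)%N -> (i.+1 < j <= n)%N -> p i j * p j i = 1).

Local Notation idx := (idx n).
Definition r a b := p a b * p b a.

Lemma idx_cases j : ((j <= n)%N /\ idx j = j) \/ ((n < j)%N /\ idx j = (2 * n - j)%N).
Proof. rewrite /Defs.idx; case: leqP => h; [left|right]; by []. Qed.

Lemma idx_rng j : (1 <= j < 2 * n)%N -> (1 <= idx j <= n)%N.
Proof. by case: (idx_cases j) => [[h ->]|[h ->]]; lia. Qed.

Lemma r_far a b : (1 <= a <= n)%N -> (1 <= b <= n)%N -> ((a.+1 < b) || (b.+1 < a))%N -> r a b = 1.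
Proof.
move=> ha hb /orP[h|h]; rewrite /r.
  by apply: hpfar; lia.
by rewrite mulrC; apply: hpfar; lia.
Qed.

Lemma r_adj a b : (1 <= a)%N -> (a.+1 = b)%N -> (b < n)%N -> r a b = q^-1.
Proof.
move=> ha hab hb; rewrite /r mulrC -hab.
by have := hpadj (i := a.+1); rewrite /= => ->//; lia.
Qed.

Lemma r_sym a b : r a b = r b a.
Proof. by rewrite /r mulrC. Qed.

Lemma r_adjn a : (a.+1 = n)%N -> r a n = q ^- 2.
Proof. by move=> h; rewrite /r -hpn -h. Qed.

Lemma r_diag a : (1 <= a < n)%N -> r a a = q ^+ 2.
Proof. by move=> h; rewrite /r hpii. Qed.

Lemma r_diagn : r n n = q ^+ 4.
Proof. by rewrite /r hpnn -exprD. Qed.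

Lemma prod_one lo hi (F : nat -> K) : (forall j, (lo <= j < hi)%N -> F j = 1) ->
  \prod_(lo <= j < hi) F j = 1.
Proof.
move=> h; rewrite big_nat_cond big1 // => j /andP[hj _]; exact: h.
Qed.

Lemma bigE (F : nat -> K) a c :
  \prod_(l <- rev (map idx (iota a c))) F l = \prod_(a <= j < a + c) F (idx j).
Proof. by rewrite big_rev big_map /index_iota addKn. Qed.

Lemma dropE i lo N : drop i (rev (map idx (iota lo N))) = rev (map idx (iota lo (N - i))).
Proof.
rewrite drop_rev size_map size_iota -map_take take_iota.
by congr (rev (map _ (iota _ _))); apply/minn_idPl; rewrite leq_subr.
Qed.

Lemma takeE i lo N : (i <= N)%N -> take i (rev (map idx (iota lo N))) = rev (map idx (iota (lo + (N - i)) i)).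
Proof.
move=> hi; rewrite take_rev size_map size_iota -map_drop drop_iota.
by congr (rev (map _ (iota _ _))); lia.
Qed.

Lemma nthE i lo N : (i < N)%N -> nth 0%N (rev (map idx (iota lo N))) i = idx (lo + (N - i.+1)).
Proof.
move=> hi; rewrite nth_rev ?size_map ?size_iota // (nth_map 0%N) ?size_iota; last by lia.
by rewrite nth_iota //; lia.
Qed.


Lemma idx_le j : (j <= n)%N -> idx j = j.
Proof. by rewrite /Defs.idx => ->. Qed.
Lemma idx_gt j : (n < j)%N -> idx j = (2 * n - j)%N.
Proof. by move=> h; rewrite /Defs.idx leqNgt h. Qed.

Lemma peel lo c hi (F : nat -> K) : (lo <= c < hi)%N ->
  \prod_(lo <= j < hi) F j = \prod_(lo <= j < c) F j * (F c * \prod_(c.+1 <= j < hi) F j).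
Proof.
by case/andP=> h1 h2; rewrite (big_cat_nat h1 (ltnW h2)) /= (big_ltn h2).
Qed.

Lemma prod_empty lo hi (F : nat -> K) : (hi <= lo)%N -> \prod_(lo <= j < hi) F j = 1.
Proof. by move=> h; rewrite big_geq. Qed.

Ltac far := apply: prod_one => ? /andP[? ?];
  match goal with |- r (Defs.idx _ ?j) _ = _ => case: (idx_cases j) => [[? ->]|[? ->]]; apply: r_far; lia end.

Definition PR lo hi b := \prod_(lo <= j < hi) r (idx j) b.

Lemma PR_B0 k m b : b = (2 * n - m)%N -> (n < m < 2 * n)%N -> (1 <= k < b)%N -> PR k m b = q^-1.
Proof.
move=> eb hm hk; rewrite /PR.
rewrite (@peel k b.-1 m); last lia.
have -> : b.-1.+1 = b by lia.
rewrite (@peel b b m); last lia.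
rewrite (@peel b.+1 b.+1 m); last lia.
have -> : \prod_(k <= j < b.-1) r (idx j) b = 1 by far.
have -> : \prod_(b <= j < b) r (idx j) b = 1 by apply: prod_empty; lia.
have -> : \prod_(b.+1 <= j < b.+1) r (idx j) b = 1 by apply: prod_empty; lia.
rewrite (idx_le (j := b.-1)); last lia.
rewrite (idx_le (j := b)); last lia.
rewrite (r_adj (a := b.-1) (b := b)); try lia.
rewrite (r_diag (a := b)); last lia.
case: (ltnP b.+1 n) => hb.
- rewrite (@peel b.+2 m.-1 m); last lia.
  have -> : \prod_(b.+2 <= j < m.-1) r (idx j) b = 1 by far.
  rewrite prod_empty; last lia.
  rewrite (idx_le (j := b.+1)); last lia.
  rewrite (idx_gt (j := m.-1)); last lia.
  have -> : (2 * n - m.-1 = b.+1)%N by lia.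
  rewrite r_sym (r_adj (a := b) (b := b.+1)) //; try lia.
  by field.
- have -> : \prod_(b.+2 <= j < m) r (idx j) b = 1 by apply: prod_empty; lia.
  rewrite (idx_le (j := b.+1)); last lia.
  have -> : b.+1 = n by lia.
  rewrite r_sym r_adjn; last lia.
  by field.
Qed.


Lemma PR_A0 k m : (1 <= k < m)%N -> (m < n)%N -> PR k m m = q^-1.
Proof.
move=> hk hm; rewrite /PR (@peel k m.-1 m); last lia.
have -> : \prod_(k <= j < m.-1) r (idx j) m = 1 by far.
rewrite prod_empty; last lia.
rewrite idx_le; last lia.
by rewrite (r_adj (a := m.-1) (b := m)); try lia; rewrite mul1r mulr1.
Qed.

Lemma PR_A0n k : (1 <= k < n)%N -> PR k n n = q^-2.
Proof.
move=> hk; rewrite /PR (@peel k n.-1 n); last lia.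
have -> : \prod_(k <= j < n.-1) r (idx j) n = 1 by far.
rewrite prod_empty; last lia.
rewrite idx_le; last lia.
by rewrite r_adjn; try lia; rewrite mul1r mulr1.
Qed.

Lemma PR_A1 k J m : (1 <= k)%N -> (J < m <= n)%N -> PR k J m = 1.
Proof. move=> hk hm; rewrite /PR; far. Qed.

Lemma PR_B1 k m b J : b = (2 * n - m)%N -> (n < m < 2 * n)%N -> (1 <= k < b)%N ->
  (k <= J < m)%N -> J != b -> J != b.+1 -> PR k J b = 1.
Proof.
move=> eb hm hk hJ h1 h2; rewrite /PR.
case: (ltnP J b) => hJb; first by far.
rewrite (@peel k b.-1 J); last lia.
have -> : b.-1.+1 = b by lia.
rewrite (@peel b b J); last lia.
rewrite (@peel b.+1 b.+1 J); last lia.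
have -> : \prod_(k <= j < b.-1) r (idx j) b = 1 by far.
have -> : \prod_(b <= j < b) r (idx j) b = 1 by apply: prod_empty; lia.
have -> : \prod_(b.+1 <= j < b.+1) r (idx j) b = 1 by apply: prod_empty; lia.
have -> : \prod_(b.+2 <= j < J) r (idx j) b = 1 by far.
rewrite (idx_le (j := b.-1)); last lia.
rewrite (idx_le (j := b)); last lia.
rewrite (idx_le (j := b.+1)); last lia.
rewrite (r_adj (a := b.-1) (b := b)); try lia.
rewrite (r_diag (a := b)); last lia.
rewrite r_sym (r_adj (a := b) (b := b.+1)) //; try lia.
by field.
Qed.

Lemma PR_B2 k b : (1 <= k < b)%N -> (b < n)%N -> PR k b b = q^-1.
Proof.
move=> hk hb; rewrite /PR (@peel k b.-1 b); last lia.
have -> : \prod_(k <= j < b.-1) r (idx j) b = 1 by far.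
rewrite prod_empty; last lia.
rewrite idx_le; last lia.
by rewrite (r_adj (a := b.-1) (b := b)); try lia; rewrite mul1r mulr1.
Qed.

Lemma PR_C0 k m : (1 <= k < n)%N -> m = (2 * n - k)%N -> PR k m k = 1.
Proof.
move=> hk em; rewrite /PR (@peel k k m); last lia.
rewrite prod_empty ?mul1r; last lia.
rewrite (@peel k.+1 k.+1 m); last lia.
rewrite prod_empty ?mul1r; last lia.
rewrite (idx_le (j := k)); last lia.
rewrite (idx_le (j := k.+1)); last lia.
rewrite r_diag; last lia.
case: (ltnP k.+1 n) => hk1.
- rewrite (@peel k.+2 m.-1 m); last lia.
  have -> : \prod_(k.+2 <= j < m.-1) r (idx j) k = 1 by far.
  rewrite (prod_empty (lo := m.-1.+1)); last lia.
  rewrite (idx_gt (j := m.-1)); last lia.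
  have -> : (2 * n - m.-1 = k.+1)%N by lia.
  rewrite r_sym (r_adj (a := k) (b := k.+1)) //; try lia.
  by field.
- rewrite prod_empty; last lia.
  have -> : k.+1 = n by lia.
  rewrite r_sym r_adjn; last lia.
  by field.
Qed.

Lemma PR_C1 k m J : (1 <= k < n)%N -> m = (2 * n - k)%N -> (k.+2 <= J < m)%N -> PR k J k = q.
Proof.
move=> hk em hJ; rewrite /PR (@peel k k J); last lia.
rewrite prod_empty ?mul1r; last lia.
rewrite (@peel k.+1 k.+1 J); last lia.
rewrite prod_empty ?mul1r; last lia.
have -> : \prod_(k.+2 <= j < J) r (idx j) k = 1 by far.
rewrite (idx_le (j := k)); last lia.
rewrite (idx_le (j := k.+1)); last lia.
rewrite r_diag; last lia.
rewrite r_sym (r_adj (a := k) (b := k.+1)) //; try lia.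
by field.
Qed.

Lemma PR_D1a k m a : a = (2 * n - k)%N -> (n < k < m)%N -> (m < 2 * n)%N -> PR k.+1 m.+1 a = q^-1.
Proof.
move=> ea hk hm; rewrite /PR (@peel k.+1 k.+1 m.+1); last lia.
rewrite prod_empty ?mul1r; last lia.
have -> : \prod_(k.+2 <= j < m.+1) r (idx j) a = 1 by far.
rewrite idx_gt; last lia.
rewrite (r_adj (a := (2 * n - k.+1)%N) (b := a)); try lia.
by rewrite mulr1.
Qed.

Lemma PR_D1b k m a J : a = (2 * n - k)%N -> (n < k < m)%N -> (m < 2 * n)%N -> (k.+2 <= J)%N -> PR J m.+1 a = 1.
Proof. move=> ea hk hm hJ; rewrite /PR; far. Qed.

Lemma PR_D2a m : (n < m < 2 * n)%N -> PR n.+1 m.+1 n = q^-2.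
Proof.
move=> hm; rewrite /PR (@peel n.+1 n.+1 m.+1); last lia.
rewrite prod_empty ?mul1r; last lia.
have -> : \prod_(n.+2 <= j < m.+1) r (idx j) n = 1 by far.
rewrite idx_gt; last lia.
have -> : (2 * n - n.+1 = n.-1)%N by lia.
by rewrite r_adjn ?mulr1 //; lia.
Qed.

Lemma PR_D2a' m J : (n < m < 2 * n)%N -> (n.+2 <= J)%N -> PR J m.+1 n = 1.
Proof. move=> hm hJ; rewrite /PR; far. Qed.

Lemma PR_D2b_full k m J0 : J0 = (2 * n - k)%N -> (1 <= k < n)%N -> (J0 < m < 2 * n)%N ->
  PR k.+1 m.+1 k = q^-1.
Proof.
move=> eJ hk hm; rewrite /PR.
case: (ltnP k.+1 n) => hk1.
- rewrite (@peel k.+1 k.+1 m.+1); last lia.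
  rewrite prod_empty ?mul1r; last lia.
  rewrite (@peel k.+2 J0.-1 m.+1); last lia.
  have -> : J0.-1.+1 = J0 by lia.
  rewrite (@peel J0 J0 m.+1); last lia.
  rewrite (prod_empty (lo := J0)) ?mul1r; last lia.
  rewrite (@peel J0.+1 J0.+1 m.+1); last lia.
  rewrite (prod_empty (lo := J0.+1)) ?mul1r; last lia.
  have -> : \prod_(k.+2 <= j < J0.-1) r (idx j) k = 1 by far.
  have -> : \prod_(J0.+2 <= j < m.+1) r (idx j) k = 1 by far.
  rewrite (idx_le (j := k.+1)); last lia.
  rewrite (idx_gt (j := J0.-1)); last lia.
  rewrite (idx_gt (j := J0)); last lia.
  rewrite (idx_gt (j := J0.+1)); last lia.
  have -> : (2 * n - J0.-1 = k.+1)%N by lia.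
  have -> : (2 * n - J0 = k)%N by lia.
  have -> : (2 * n - J0.+1 = k.-1)%N by lia.
  rewrite r_sym (r_adj (a := k) (b := k.+1)) //; try lia.
  rewrite r_diag; last lia.
  rewrite (r_adj (a := k.-1) (b := k)); try lia.
  by field.
- rewrite (@peel k.+1 k.+1 m.+1); last lia.
  rewrite prod_empty ?mul1r; last lia.
  rewrite (@peel k.+2 k.+2 m.+1); last lia.
  rewrite (prod_empty (lo := k.+2)) ?mul1r; last lia.
  rewrite (@peel k.+3 k.+3 m.+1); last lia.
  rewrite (prod_empty (lo := k.+3)) ?mul1r; last lia.
  have -> : \prod_(k.+4 <= j < m.+1) r (idx j) k = 1 by far.
  rewrite (idx_le (j := k.+1)); last lia.
  rewrite (idx_gt (j := k.+2)); last lia.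
  rewrite (idx_gt (j := k.+3)); last lia.
  have -> : (2 * n - k.+2 = k)%N by lia.
  have -> : (2 * n - k.+3 = k.-1)%N by lia.
  have -> : k.+1 = n by lia.
  rewrite r_sym r_adjn; last lia.
  rewrite r_diag; last lia.
  rewrite (r_adj (a := k.-1) (b := k)); try lia.
  by field.
Qed.

Lemma PR_D2b_part k m J0 J : J0 = (2 * n - k)%N -> (1 <= k < n)%N -> (J0 < m < 2 * n)%N ->
  (k.+2 <= J <= m.+1)%N -> J != J0 -> J != J0.+1 -> PR J m.+1 k = 1.
Proof.
move=> eJ hk hm hJ h1 h2; rewrite /PR.
case: (ltnP J0.+1 J) => hJ0; first by far.
rewrite (@peel J J0.-1 m.+1); last lia.
have -> : J0.-1.+1 = J0 by lia.
rewrite (@peel J0 J0 m.+1); last lia.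
rewrite (prod_empty (lo := J0)) ?mul1r; last lia.
rewrite (@peel J0.+1 J0.+1 m.+1); last lia.
rewrite (prod_empty (lo := J0.+1)) ?mul1r; last lia.
have -> : \prod_(J <= j < J0.-1) r (idx j) k = 1 by far.
have -> : \prod_(J0.+2 <= j < m.+1) r (idx j) k = 1 by far.
rewrite (idx_gt (j := J0.-1)); last lia.
rewrite (idx_gt (j := J0)); last lia.
rewrite (idx_gt (j := J0.+1)); last lia.
have -> : (2 * n - J0.-1 = k.+1)%N by lia.
have -> : (2 * n - J0 = k)%N by lia.
have -> : (2 * n - J0.+1 = k.-1)%N by lia.
rewrite r_sym (r_adj (a := k) (b := k.+1)) //; try lia.
rewrite r_diag; last lia.
rewrite (r_adj (a := k.-1) (b := k)); try lia.
by field.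
Qed.

Lemma PR_D2b_mu k m J0 : J0 = (2 * n - k)%N -> (1 <= k < n)%N -> (J0 < m < 2 * n)%N ->
  PR J0.+1 m.+1 k = q^-1.
Proof.
move=> eJ hk hm; rewrite /PR (@peel J0.+1 J0.+1 m.+1); last lia.
rewrite prod_empty ?mul1r; last lia.
have -> : \prod_(J0.+2 <= j < m.+1) r (idx j) k = 1 by far.
rewrite idx_gt; last lia.
have -> : (2 * n - J0.+1 = k.-1)%N by lia.
by rewrite (r_adj (a := k.-1) (b := k)) ?mulr1 //; lia.
Qed.


Lemma Pi_recr k M (F : nat -> nat -> K) : (k <= M.+1)%N ->
  \prod_(k <= i < M.+2) \prod_(i.+1 <= j < M.+2) F i j =
  (\prod_(k <= i < M.+1) \prod_(i.+1 <= j < M.+1) F i j) * \prod_(k <= i < M.+1) F i M.+1.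
Proof.
move=> h; rewrite big_nat_recr //= (big_geq (m := M.+2)) // mulr1.
rewrite -big_split; apply: eq_big_nat => i /andP[_ hi].
by rewrite big_nat_recr.
Qed.

Lemma Pi_recl k m (F : nat -> nat -> K) : (k <= m)%N ->
  \prod_(k <= i < m.+1) \prod_(i.+1 <= j < m.+1) F i j =
  (\prod_(k.+1 <= j < m.+1) F k j) * \prod_(k.+1 <= i < m.+1) \prod_(i.+1 <= j < m.+1) F i j.
Proof. by move=> h; rewrite big_ltn. Qed.

Lemma prod_nz lo hi (F : nat -> K) : (forall j, (lo <= j < hi)%N -> F j != 0) -> \prod_(lo <= j < hi) F j != 0.
Proof.
move=> h; rewrite prodf_seq_neq0; apply/allP => j; rewrite mem_index_iota => hj.
exact: h.
Qed.

Lemma alpha_stepL k m (c0 L0 : K) : (1 <= k < m)%N -> (m < 2 * n)%N -> PR k m (idx m) = L0 ->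
  eps n q k m * (q - 1) * L0 = eps n q k m.-1 * (1 - c0 * L0) ->
  alpha n q p k m = alpha n q p k m.-1 * (\prod_(k <= j < m) (p (idx m) (idx j))^-1 * (1 - c0 * L0)).
Proof.
case: m => [|M] hk hm; first lia.
move=> eL H; rewrite /alpha -pred_Sn Pi_recr; last lia.
have -> : (M.+1 - k = (M - k).+1)%N by lia.
rewrite exprS.
move: eL H; rewrite /PR /r big_split /= prodfV.
have Q0 : \prod_(k <= j < M.+1) p (idx M.+1) (idx j) != 0.
  apply: prod_nz => j hj; apply: hp0; apply: idx_rng; lia.
move=> <- H.
set P := \prod_(k <= i < M.+1) p (idx i) (idx M.+1) in H *.
set Q := \prod_(k <= i < M.+1) p (idx M.+1) (idx i) in H Q0 *.
set Pi := \prod_(k <= i < M.+1) \prod_(i.+1 <= j < M.+1) p (idx i) (idx j).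
rewrite [RHS](_ : _ = eps n q k M * (1 - c0 * (P * Q)) * ((q-1)^+(M-k) * Pi / Q)); last by field.
by rewrite -H; field.
Qed.

Lemma alpha_stepR k m (c0 L0 : K) : (1 <= k < m)%N -> (m < 2 * n)%N -> PR k.+1 m.+1 (idx k) = L0 ->
  eps n q k m * (q - 1) * L0 = eps n q k.+1 m * (1 - c0 * L0) ->
  alpha n q p k m = alpha n q p k.+1 m * (\prod_(k.+1 <= j < m.+1) (p (idx j) (idx k))^-1 * (1 - c0 * L0)).
Proof.
move=> hk hm eL H; rewrite /alpha Pi_recl; last lia.
have -> : (m - k = (m - k.+1).+1)%N by lia.
rewrite exprS.
move: eL H; rewrite /PR /r big_split /= prodfV.
have Q0 : \prod_(k.+1 <= j < m.+1) p (idx j) (idx k) != 0.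
  apply: prod_nz => j hj; apply: hp0; apply: idx_rng; lia.
move=> <- H.
set Q := \prod_(k.+1 <= j < m.+1) p (idx j) (idx k) in H Q0 *.
set P := \prod_(k.+1 <= j < m.+1) p (idx k) (idx j) in H *.
set Pi := \prod_(k.+1 <= i < m.+1) \prod_(i.+1 <= j < m.+1) p (idx i) (idx j).
rewrite [RHS](_ : _ = eps n q k.+1 m * (1 - c0 * (Q * P)) * ((q-1)^+(m-k.+1) * Pi / Q)); last by field.
by rewrite -H; field.
Qed.

Lemma eps_a k m : (k <= n <= m)%N -> m != (2 * n - k)%N -> eps n q k m = 1 + q.
Proof. by case/andP=> a1 a2 h2; rewrite /eps /phi a1 a2 h2. Qed.

Lemma eps_b k m : m = (2 * n - k)%N -> m != n -> eps n q k m = 1 + q^-1.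
Proof.
move=> h1 h2; rewrite /eps /phi -h1 eqxx h2.
by case: (k <= n)%N; case: (n <= m)%N.
Qed.

Lemma eps_1 k m : ~~ ((k <= n) && (n <= m))%N -> m != (2 * n - k)%N -> eps n q k m = 1.
Proof.
move=> h1 h2; rewrite /eps /phi (negbTE h2) /=.
by case: (k <= n)%N h1 => //=; case: (n <= m)%N.
Qed.


Lemma rev_iotaS lo N : rev (map idx (iota lo N.+1)) = idx (lo + N) :: rev (map idx (iota lo N)).
Proof. by rewrite -addn1 iotaD map_cat rev_cat. Qed.

Lemma rev_iota_cons lo N : rev (map idx (iota lo N.+1)) = rev (map idx (iota lo.+1 N)) ++ [:: idx lo].
Proof. by rewrite /= rev_cons cats1. Qed.

Lemma letters_ok lo N : (1 <= lo)%N -> (lo + N <= 2 * n)%N ->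
  forall l, l \in rev (map idx (iota lo N)) -> (1 <= l <= n)%N.
Proof.
move=> h1 h2 l; rewrite mem_rev => /mapP [j]; rewrite mem_iota => hj ->.
apply: idx_rng; lia.
Qed.

Lemma alpha_kk k : alpha n q p k k = 1.
Proof.
have h1 : [&& (k <= n)%N, (n <= k)%N & k != (2 * n - k)%N] = false.
  by apply/negP => /and3P[a b /eqP c]; lia.
have h2 : (k == (2 * n - k)%N) && (k != n) = false.
  by apply/negP => /andP[/eqP a /eqP b]; lia.
rewrite /alpha /eps /phi h1 h2 subnn expr0 big_nat1 big_geq //.
by rewrite !mulr1.
Qed.

Lemma equiv_letter k : shequiv (letter K n k) (alpha n q p k k) (revword n k k).
Proof.
move=> s; rewrite alpha_kk shscaleE mul1r /revword /vw subSnn.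
by [].
Qed.


Lemma lnest_ok d : forall k, (1 <= k)%N -> (k + d < 2 * n - k)%N ->
  shequiv (lnest n p k d) (alpha n q p k (k + d)) (revword n k (k + d)).
Proof.
elim: d => [|d IH] k hk hd.
  by rewrite addn0; exact: equiv_letter.
have IHk := IH k hk ltac:(lia).
move=> s.
pose w := rev (map idx (iota k d.+1)).
pose b := idx (k + d.+1).
have ew : revword n k (k + d) = w.
  by rewrite /revword /vw /w; congr (rev (map _ (iota _ _))); lia.
rewrite ew in IHk.
have hlet : forall l, l \in w -> (1 <= l <= n)%N by apply: letters_ok; lia.
have hb : (1 <= b <= n)%N by apply: idx_rng; lia.
rewrite -[lnest n p k d.+1]/(shbr p (pw p (vw n k (k + d)) [:: idx (k + d.+1)]) (lnest n p k d) [:: ((1:K), [:: b])]).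
have ec : pw p (vw n k (k + d)) [:: idx (k + d.+1)] = 1 * \prod_(l <- w) p l b.
  by rewrite mul1r /pw -ew /revword big_rev; apply: eq_bigr => l _; rewrite big_seq1.
rewrite ec (brL' 1 s IHk); first last.
- by move=> l /hlet hl; apply: hp0.
- by move=> l /hlet hl; apply: hp0.
rewrite size_rev size_map size_iota.
have er : revword n k (k + d.+1) = b :: w.
  rewrite /revword /vw (_ : ((k + d.+1).+1 - k = d.+2)%N); last lia. by rewrite rev_iotaS.
rewrite er shscaleE shcoefE big_seq1.
pose f := fun i => \prod_(l <- drop i w) (p b l)^-1 * (1 - 1 * \prod_(l <- drop i w) (p l b * p b l)).
have el : forall i, \prod_(l <- drop i w) (p l b * p b l) = PR k (k + (d.+1 - i)) b.
  by move=> i; rewrite /w dropE bigE.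
have HS : \sum_(0 <= i < d.+2) (ins w b i == s)%:R * f i = (ins w b 0 == s)%:R * f 0.
  case: (leqP (k + d.+1) n) => hm.
  - apply: sum_single => // i hi hi0.
    rewrite /f el /b idx_le // PR_A1 ?mulr1 ?subrr ?mulr0 //; lia.
  - pose bt := (2 * n - (k + d.+1))%N.
    have ebt : b = bt by rewrite /b idx_gt.
    pose p0 := (k + d.+1 - bt).-1.
    have hp0w : (p0 < size w)%N by rewrite /w size_rev size_map size_iota; lia.
    have hnth : nth 0%N w p0 = b.
      rewrite /w nthE; last lia.
      rewrite ebt idx_le; lia.
    apply: (@sum_pair _ _ f s d.+1 0 p0); try lia.
    + exact: ins_dup.
    + apply: pairL => //; first by apply: hp0.
      rewrite el mul1r ebt (_ : (k + (d.+1 - p0.+1) = bt)%N); last lia.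
      by rewrite PR_B2; try lia; rewrite hpii //; lia.
    + move=> i hi h1 h2 h3.
      rewrite /f el ebt (PR_B1 (m := (k + d.+1)%N)) ?mulr1 ?subrr ?mulr0 //; try lia.
have [L0 [eL0 eE]] : exists L0, PR k (k + d.+1) (idx (k + d.+1)) = L0 /\
   eps n q k (k + d.+1) * (q - 1) * L0 = eps n q k (k + d.+1).-1 * (1 - 1 * L0).
  have -> : (k + d.+1).-1 = (k + d)%N by lia.
  case: (ltngtP (k + d.+1) n) => hm.
  - exists q^-1; split; first by rewrite idx_le ?PR_A0 //; lia.
    rewrite !eps_1; try (by apply/negP => /andP[? ?]; lia); try (by apply/eqP; lia).
    by field.
  - exists q^-1; split.
      rewrite idx_gt; last lia.
      by apply: PR_B0 => //; lia.
    rewrite !eps_a; try lia; try (by apply/eqP; lia).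
    by field.
  - exists (q ^- 2); split; first by rewrite hm idx_le ?PR_A0n //; lia.
    rewrite eps_a; try lia; try (by apply/eqP; lia).
    rewrite eps_1; try (by apply/negP => /andP[? ?]; lia); try (by apply/eqP; lia).
    by field.
rewrite HS (@alpha_stepL k (k + d.+1) 1 L0) //; try lia.
have -> : (k + d.+1).-1 = (k + d)%N by lia.
have e0 := el 0; rewrite drop0 subn0 in e0.
rewrite /ins take0 drop0 /f drop0 e0 eL0 /w bigE cat0s.
rewrite -[(1, _ :: _).2]/(_ :: _) -[(1, _ :: _).1]/(1 : K).
by rewrite /b; ring.
Qed.


Lemma vkmC k m : (1 <= k < n)%N -> m = (2 * n - k)%N ->
  shequiv (vkm n q p k m) (alpha n q p k m) (revword n k m).
Proof.
move=> hk em s.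
have IHk := lnest_ok (d := (m.-1 - k)%N) (k := k) ltac:(lia) ltac:(lia).
rewrite (_ : (k + (m.-1 - k) = m.-1)%N) in IHk; last lia.
pose N := (m - k)%N.
pose w := rev (map idx (iota k N)).
pose b := idx m.
have ebk : b = k by rewrite /b idx_gt; lia.
have ew : revword n k m.-1 = w.
  by rewrite /revword /vw /w; congr (rev (map _ (iota _ _))); lia.
rewrite ew in IHk.
have hlet : forall l, l \in w -> (1 <= l <= n)%N by apply: letters_ok; lia.
have hb : (1 <= b <= n)%N by apply: idx_rng; lia.
have h1 : (m <= k)%N = false by apply/negP; lia.
have h2 : (m < phi n k)%N = false by apply/negP; rewrite /phi; lia.
have h3 : (phi n k < m)%N = false by apply/negP; rewrite /phi; lia.
rewrite /vkm h1 h2 h3.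
rewrite -[shadd _ _]/(shbr p (q^-1 * pw p (vw n k m.-1) [:: idx m]) (lnest n p k (m.-1 - k)) [:: ((1:K), [:: b])]).
have ec : pw p (vw n k m.-1) [:: idx m] = \prod_(l <- w) p l b.
  by rewrite /pw -ew /revword big_rev; apply: eq_bigr => l _; rewrite big_seq1.
rewrite ec (brL' q^-1 s IHk); first last.
- by move=> l /hlet hl; apply: hp0.
- by move=> l /hlet hl; apply: hp0.
rewrite size_rev size_map size_iota.
have er : revword n k m = b :: w.
  rewrite /revword /vw (_ : (m.+1 - k = N.+1)%N); last lia.
  by rewrite rev_iotaS (_ : (k + N = m)%N) //; lia.
rewrite er shscaleE shcoefE big_seq1.
pose f := fun i => \prod_(l <- drop i w) (p b l)^-1 * (1 - q^-1 * \prod_(l <- drop i w) (p l b * p b l)).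
have el : forall i, \prod_(l <- drop i w) (p l b * p b l) = PR k (k + (N - i)) b.
  by move=> i; rewrite /w dropE bigE.
have HS : \sum_(0 <= i < N.+1) (ins w b i == s)%:R * f i = (ins w b 0 == s)%:R * f 0.
  pose p0 := N.-1.
  have hp0w : (p0 < size w)%N by rewrite /w size_rev size_map size_iota; lia.
  have hnth : nth 0%N w p0 = b.
    rewrite /w nthE; last lia.
    rewrite ebk idx_le; lia.
  apply: (@sum_pair _ _ f s N 0 p0); try lia.
  + exact: ins_dup.
  + apply: pairL => //; first by apply: hp0.
    rewrite el ebk (_ : (k + (N - p0.+1) = k)%N); last lia.
    rewrite /PR prod_empty // mulr1 hpii //; lia.
  + move=> i hi i1 i2 i3.
    rewrite /f el ebk (PR_C1 (m := m)); try lia.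
    by rewrite mulVf // subrr mulr0.
have [L0 [eL0 eE]] : exists L0, PR k m (idx m) = L0 /\
   eps n q k m * (q - 1) * L0 = eps n q k m.-1 * (1 - q^-1 * L0).
  exists 1; split; first by rewrite -/b ebk PR_C0.
  rewrite eps_b //; last by apply/eqP; lia.
  rewrite eps_a; try lia; try (by apply/eqP; lia).
  by field.
have Nm : (N.+1 = (size w).+1)%N by rewrite /w size_rev size_map size_iota.
rewrite HS (@alpha_stepL k m q^-1 L0) //; try lia.
have e0 := el 0; rewrite drop0 subn0 in e0.
rewrite /ins take0 drop0 /f drop0 e0 (_ : (k + N = m)%N) ?eL0; last lia.
rewrite /w bigE (_ : (k + N = m)%N); last lia.
rewrite -[(1, _ :: _).2]/(_ :: _) -[(1, _ :: _).1]/(1 : K).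
by rewrite /b; ring.
Qed.


Lemma rnest_ok m : (m < 2 * n)%N -> forall d k, (1 <= k)%N -> (k + d = m)%N ->
  (d == 0)%N || (2 * n - k < m)%N ->
  shequiv (rnest n p d k) (alpha n q p k m) (revword n k m).
Proof.
move=> hm; elim=> [|d IH] k hk hkd hc.
  by rewrite addn0 in hkd; rewrite -hkd; exact: equiv_letter.
have hc' : (2 * n - k < m)%N by case/orP: hc.
have IHk := IH k.+1 ltac:(lia) ltac:(lia) ltac:(apply/orP; right; lia).
move=> s.
pose N := d.+1.
pose w := rev (map idx (iota k.+1 N)).
pose a := idx k.
have ew : revword n k.+1 m = w.
  by rewrite /revword /vw /w; congr (rev (map _ (iota _ _))); lia.
rewrite ew in IHk.
have hlet : forall l, l \in w -> (1 <= l <= n)%N by apply: letters_ok; lia.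
have ha : (1 <= a <= n)%N by apply: idx_rng; lia.
rewrite -[rnest n p d.+1 k]/(shbr p (pw p [:: idx k] (vw n k.+1 (k + d.+1))) [:: ((1:K), [:: a])] (rnest n p d k.+1)).
have ev : vw n k.+1 (k + d.+1) = map idx (iota k.+1 N).
  by rewrite /vw; congr (map _ (iota _ _)); lia.
have ec : pw p [:: idx k] (vw n k.+1 (k + d.+1)) = 1 * \prod_(l <- w) p a l.
  by rewrite mul1r /pw big_seq1 ev /w big_rev.
rewrite ec (brR' 1 s IHk); first last.
- by move=> l /hlet hl; apply: hp0.
- by move=> l /hlet hl; apply: hp0.
have sw : size w = N by rewrite /w size_rev size_map size_iota.
rewrite sw.
have tw : take N w = w by rewrite -sw take_size.
have dw : drop N w = [::] by rewrite -sw drop_size.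
have er : revword n k m = ins w a N.
  rewrite /revword /vw (_ : (m.+1 - k = N.+1)%N); last lia.
  by rewrite rev_iota_cons /ins tw dw.
rewrite er shscaleE shcoefE big_seq1.
pose f := fun i => \prod_(l <- take i w) (p l a)^-1 * (1 - 1 * \prod_(l <- take i w) (p l a * p a l)).
have el : forall i, (i <= N)%N -> \prod_(l <- take i w) (p l a * p a l) = PR (m.+1 - i) m.+1 a.
  move=> i hi; rewrite /w takeE // bigE.
  have -> : (k.+1 + (N - i) = m.+1 - i)%N by lia.
  by have -> : (m.+1 - i + i = m.+1)%N by lia.
have HS : \sum_(0 <= i < N.+1) (ins w a i == s)%:R * f i = (ins w a N == s)%:R * f N.
  case: (ltngtP n k) => hkn.
  - apply: sum_single => // i hi hi0.
    rewrite /f el; last lia.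
    rewrite (PR_D1b (k := k) (m := m)) ?mulr1 ?subrr ?mulr0 //; try lia.
    by rewrite /a idx_gt.
  - pose J0 := (2 * n - k)%N.
    have eak : a = k by rewrite /a idx_le //; lia.
    pose p0 := (m - J0)%N.
    have hp0w : (p0 < size w)%N by rewrite sw; lia.
    have hnth : nth 0%N w p0 = a.
      rewrite /w nthE; last lia.
      rewrite eak idx_gt; lia.
    apply: (@sum_pair _ _ f s N N p0); try lia.
    + exact: ins_dup.
    + apply: pairR => //; first by apply: hp0.
      rewrite el; last lia.
      rewrite eak (_ : (m.+1 - p0 = J0.+1)%N); last lia.
      by rewrite mul1r (PR_D2b_mu (m := m)) //; try lia; rewrite hpii //; lia.
    + move=> i hi i1 i2 i3.
      rewrite /f el; last lia.
      by rewrite eak (PR_D2b_part (k := k) (m := m) (J0 := J0)) ?mulr1 ?subrr ?mulr0 //; try lia; apply/eqP; lia.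
  - apply: sum_single => // i hi hi0.
    rewrite /f el; last lia.
    rewrite /a -hkn idx_le // (PR_D2a' (m := m)) ?mulr1 ?subrr ?mulr0 //; lia.
have [L0 [eL0 eE]] : exists L0, PR k.+1 m.+1 (idx k) = L0 /\
   eps n q k m * (q - 1) * L0 = eps n q k.+1 m * (1 - 1 * L0).
  case: (ltngtP n k) => hkn.
  - exists q^-1; split; first by rewrite idx_gt //; apply: (PR_D1a (k := k)); lia.
    rewrite !eps_1; try (by apply/negP => /andP[? ?]; lia); try (by apply/eqP; lia).
    by field.
  - exists q^-1; split; first by rewrite idx_le; [apply: (PR_D2b_full (J0 := (2 * n - k)%N))|]; lia.
    rewrite !eps_a; try lia; try (by apply/eqP; lia).
    by field.
  - exists (q ^- 2); split; first by rewrite -hkn idx_le ?PR_D2a //; lia.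
    rewrite eps_a; try lia; try (by apply/eqP; lia).
    rewrite eps_1; try (by apply/negP => /andP[? ?]; lia); try (by apply/eqP; lia).
    by field.
rewrite HS (@alpha_stepR k m 1 L0) //; try lia.
have eN := el N (leqnn N).
rewrite (_ : (m.+1 - N = k.+1)%N) in eN; last lia.
rewrite /f tw.
rewrite tw in eN.
rewrite eN eL0 /w bigE (_ : (k.+1 + N = m.+1)%N); last lia.
rewrite -[(1, _).2]/(ins _ _ _) -[(1, _).1]/(1 : K).
by rewrite /a; ring.
Qed.


Lemma main_vkm k m : (1 <= k)%N -> (k <= m)%N -> (m < 2 * n)%N ->
  shequiv (vkm n q p k m) (alpha n q p k m) (revword n k m).
Proof.
move=> hk hkm hm.
case: (ltnP k m) => hkm'; last first.
  have e : m = k by lia.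
  rewrite e /vkm leqnn; exact: equiv_letter.
have h1 : (m <= k)%N = false by apply/negP; lia.
case: (ltngtP m (phi n k)) => hphi.
- rewrite /vkm h1 hphi.
  have := lnest_ok (d := (m - k)%N) (k := k) ltac:(lia) ltac:(rewrite /phi in hphi; lia).
  by rewrite (_ : (k + (m - k) = m)%N) //; lia.
- have h2 : (m < phi n k)%N = false by apply/negP; lia.
  rewrite /vkm h1 h2 hphi.
  apply: (rnest_ok hm (d := (m - k)%N)); try lia.
  by apply/orP; right; rewrite /phi in hphi; lia.
- rewrite /phi in hphi.
  by apply: vkmC; lia.
Qed.

End Spec.

Unset Implicit Arguments.

Theorem proposition4p2 (K : fieldType) (n : nat) (q : K) (p : nat -> nat -> K)
  (hn : (2 <= n)%N)
  (hq0 : q != 0) (hq3 : q ^+ 3 != 1) (hq1 : q != -1)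
  (hp0 : forall i j, (1 <= i <= n)%N -> (1 <= j <= n)%N -> p i j != 0)
  (hpii : forall i, (1 <= i < n)%N -> p i i = q)
  (hpnn : p n n = q ^+ 2)
  (hpadj : forall i, (1 < i < n)%N -> p i i.-1 * p i.-1 i = q^-1)
  (hpn : p n.-1 n * p n n.-1 = q ^- 2)
  (hpfar : forall i j, (1 <= i)%N -> (i.+1 < j <= n)%N -> p i j * p j i = 1)
  (k m : nat) (hk : (1 <= k)%N) (hkm : (k <= m)%N) (hm : (m < 2 * n)%N) :
  forall w : seq nat,
    shcoef (vkm n q p k m) w
    = shcoef (shscale (alpha n q p k m) [:: (1, revword n k m)]) w.
Proof.
move=> w.
by apply: main_vkm.
Qed.
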